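(* Consider the upstream-downstream model described in the context, with $e_\rightarrow>e_\leftarrow$, and satisfying the fixation assumption. Let $d_\uparrow$ and $d_\downarrow$ be the death rates of each upstream and each downstream site, respectively. Then the overall fixation probability satisfies $\rho>1/N$, and consequently the molecular clock rate satisfies $K>u$, if and only if $d_\uparrow>d_\downarrow$.
   Context: General framework: $N$ sites, each occupied by an individual of type M or R; a replacement event is a pair $(R,\alpha)$ with $R\subseteq\{1,\ldots,N\}$, $\alpha:R\to\{1,\ldots,N\}$; a state-independent replacement rule $p(R,\alpha)$ drives the Markov chain where at each step an event is drawn and $s_i'=s_i$ for $i\notin R$, $s_i'=s_{\alpha(i)}$ for $i\in R$. Fixation assumption: there exist a site $i$ and a finite sequence of positive-probability events which, occurring consecutively, make every site carry the type initially at $i$. Define $e_{ij}=\sum_{(R,\alpha):\,j\in R,\,\alpha(j)=i}p(R,\alpha)$, $d_i=\sum_j e_{ji}$, $B=\sum_{i,j}e_{ij}$; $\rho_i$ is the probability that the chain started with M at site $i$ only is absorbed in all-M; $\rho=\frac1B\sum_i d_i\rho_i$; $K=Nu\rho$ for a mutation probability $u>0$. Upstream-downstream model: the sites are partitioned into $N_\uparrow\ge1$ upstream and $N_\downarrow\ge1$ downstream sites, $N=N_\uparrow+N_\downarrow$, with nonnegative constants $e_\uparrow,e_\downarrow,e_\rightarrow,e_\leftarrow$ such that $e_{ij}=e_\uparrow$ if $i,j$ are both upstream, $e_{ij}=e_\downarrow$ if both downstream, $e_{ij}=e_\rightarrow$ if $i$ is upstream and $j$ downstream, and $e_{ij}=e_\leftarrow$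 if $i$ is downstream and $j$ upstream. Then all upstream sites share a common death rate $d_\uparrow$ and all downstream sites a common death rate $d_\downarrow$, and $B=N_\uparrow d_\uparrow+N_\downarrow d_\downarrow$. *)

(* Defs.v *)
From HB Require Import structures.
From mathcomp Require Import all_boot all_order all_algebra.
From mathcomp Require Import boolp classical_sets reals topology normedtype sequences.
Set Implicit Arguments. Unset Strict Implicit. Unset Printing Implicit Defensive.
Import Order.TTheory GRing.Theory Num.Theory.
Local Open Scope ring_scope.

Section Model.
Variables (R : realType) (N : nat).

(* A replacement event (R, alpha): the set R of replaced sites and the parent
   map alpha (only its values on R matter). *)
Definition event := ({set 'I_N} * {ffun 'I_N -> 'I_N})%type.

(* A state: true = type M, false = type R. *)
Definition state := {ffun 'I_N -> bool}.

Definition apply_event (ev : event) (s : state) : state :=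
  [ffun j => if j \in ev.1 then s (ev.2 j) else s j].

Definition is_replacement_rule (p : event -> R) : Prop :=
  (forall ev, 0 <= p ev) /\ \sum_(ev : event) p ev = 1.

Definition fixation_assumption (p : event -> R) : Prop :=
  exists (i : 'I_N) (evs : seq event),
    all (fun ev => 0 < p ev) evs /\
    forall (s : state) (j : 'I_N),
      foldl (fun s ev => apply_event ev s) s evs j = s i.

(* e_ij : expected offspring of i transferred to j *)
Definition e_coef (p : event -> R) (i j : 'I_N) : R :=
  \sum_(ev : event | (j \in ev.1) && (ev.2 j == i)) p ev.

Definition death (p : event -> R) (i : 'I_N) : R := \sum_(j : 'I_N) e_coef p j i.

Definition Btot (p : event -> R) : R := \sum_(i : 'I_N) \sum_(j : 'I_N) e_coef p i j.

Definition trans (p : event -> R) (s s' : state) : R :=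
  \sum_(ev : event | apply_event ev s == s') p ev.

Fixpoint distr (p : event -> R) (s0 : state) (t : nat) (s : state) : R :=
  match t with
  | O => (s == s0)%:R
  | t'.+1 => \sum_(s' : state) distr p s0 t' s' * trans p s' s
  end.

Definition allM : state := [ffun _ => true].
Definition singleM (i : 'I_N) : state := [ffun j => j == i].

(* rho_i: probability that the chain started with M at site i only is absorbed
   in all-M (all-M is absorbing, so this is lim_t P(X_t = all-M)). *)
Definition rho_i (p : event -> R) (i : 'I_N) : R :=
  limn (fun t : nat => (distr p (singleM i) t allM : R^o)).

Definition rho (p : event -> R) : R :=
  (\sum_(i : 'I_N) death p i * rho_i p i) / Btot p.

Definition Kclock (p : event -> R) (u : R) : R := N%:R * u * rho p.

Definition upstream_downstream (p : event -> R) (up : {set 'I_N})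
    (eu ed er el : R) : Prop :=
  forall i j : 'I_N,
    e_coef p i j =
      if i \in up then (if j \in up then eu else er)
      else (if j \in up then el else ed).

End Model.

(* Main.v *)
Require Import Defs.
From HB Require Import structures.
From mathcomp Require Import all_boot all_order all_algebra.
From mathcomp Require Import boolp classical_sets reals topology normedtype sequences.
From mathcomp Require Import ring lra.
Import Order.TTheory GRing.Theory Num.Theory.
Local Open Scope ring_scope.
Set Implicit Arguments. Unset Strict Implicit.

Section S.
Variables (R : realType) (N : nat) (p : event N -> R).
Hypothesis p0 : forall ev, 0 <= p ev.
Hypothesis p1 : \sum_(ev : event N) p ev = 1.

Definition T (g : state N -> R) (s : state N) : R :=
  \sum_(ev : event N) p ev * g (apply_event ev s).
Definition E s0 t (g : state N -> R) : R :=
  \sum_(s : state N) distr p s0 t s * g s.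

Lemma trans_sum (g : state N -> R) s' :
  \sum_(s : state N) trans p s' s * g s = T g s'.
Proof.
rewrite /T /trans.
under eq_bigr => s _ do rewrite big_distrl /=.
rewrite (exchange_big_dep predT) //=.
apply: eq_bigr => ev _.
by rewrite (big_pred1 (apply_event ev s')) // => s; rewrite /= eq_sym.
Qed.

Lemma E_succ s0 t g : E s0 t.+1 g = E s0 t (T g).
Proof.
rewrite /E /=.
under eq_bigr => s _ do rewrite big_distrl /=.
rewrite exchange_big /=; apply: eq_bigr => s' _.
rewrite -trans_sum big_distrr /=; apply: eq_bigr => s _; by rewrite mulrA.
Qed.

Lemma trans_ge0 s s' : 0 <= trans p s s'.
Proof. by apply: sumr_ge0 => ev _; exact: p0. Qed.

Lemma distr_ge0 s0 t s : 0 <= distr p s0 t s.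
Proof.
elim: t s => [|t IH] s /=; first by rewrite ler0n.
by apply: sumr_ge0 => s' _; apply: mulr_ge0 => //; exact: trans_ge0.
Qed.

Lemma E_le s0 t f g : (forall s, f s <= g s) -> E s0 t f <= E s0 t g.
Proof. by move=> H; apply: ler_sum => s _; apply: ler_wpM2l => //; exact: distr_ge0. Qed.

Lemma E_scale s0 t c f : E s0 t (fun s => c * f s) = c * E s0 t f.
Proof. by rewrite /E big_distrr; apply: eq_bigr => s _; rewrite mulrCA. Qed.

Lemma sum_delta (a : state N) (f : state N -> R) :
  \sum_(s : state N) (s == a)%:R * f s = f a.
Proof.
rewrite (bigD1 a) //= eqxx mul1r big1 ?addr0 // => s /negbTE ->; by rewrite mul0r.
Qed.

Lemma E0 s0 f : E s0 0 f = f s0.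
Proof. exact: sum_delta. Qed.

Lemma E_shift s0 t k g : E s0 (t + k) g = E s0 t (iter k T g).
Proof.
elim: k g => [|k IH] g; first by rewrite addn0.
by rewrite addnS E_succ IH iterSr.
Qed.

Lemma T_le f g : (forall s, f s <= g s) -> forall s, T f s <= T g s.
Proof. by move=> H s; apply: ler_sum => ev _; apply: ler_wpM2l. Qed.

Lemma iter_le k f g : (forall s, f s <= g s) -> forall s, iter k T f s <= iter k T g s.
Proof. elim: k => [|k IH] H s //=; apply: T_le => s'; exact: IH. Qed.

Lemma T_ge0 f : (forall s, 0 <= f s) -> forall s, 0 <= T f s.
Proof. by move=> H s; apply: sumr_ge0 => ev _; apply: mulr_ge0. Qed.

Lemma iter_ge0 k f : (forall s, 0 <= f s) -> forall s, 0 <= iter k T f s.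
Proof. elim: k => [|k IH] H s //=; apply: T_ge0 => s'; exact: IH. Qed.

Lemma T_add f g s : T (fun x => f x + g x) s = T f s + T g s.
Proof. by rewrite /T -big_split; apply: eq_bigr => ev _; rewrite mulrDr. Qed.

Lemma iter_add k f g s :
  iter k T (fun x => f x + g x) s = iter k T f s + iter k T g s.
Proof.
elim: k s => [|k IH] s //=.
rewrite -T_add; apply: eq_bigr => ev _; by rewrite IH.
Qed.

Lemma T_const c s : T (fun _ => c) s = c.
Proof. by rewrite /T -big_distrl /= p1 mul1r. Qed.

Lemma iter_const k c s : iter k T (fun _ => c) s = c.
Proof.
elim: k s => [|k IH] s //=.
rewrite -{2}(T_const c s); apply: eq_bigr => ev _; by rewrite IH.
Qed.

Lemma T_ge_ev f ev s : (forall x, 0 <= f x) -> p ev * f (apply_event ev s) <= T f s.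
Proof.
move=> H; rewrite /T (bigD1 ev) //= lerDl.
by apply: sumr_ge0 => e _; apply: mulr_ge0.
Qed.

Lemma path_bound evs f s : (forall x, 0 <= f x) -> all (fun ev => 0 < p ev) evs ->
  \prod_(ev <- evs) p ev * f (foldl (fun s ev => apply_event ev s) s evs)
    <= iter (size evs) T f s.
Proof.
move=> Hf; elim: evs s => [|ev evs IH] s /=; first by rewrite big_nil mul1r.
move=> /andP[Hev Hall].
rewrite big_cons -mulrA.
apply: le_trans (T_ge_ev _ _ (iter_ge0 _ Hf)).
apply: ler_wpM2l; first exact: p0.
exact: IH.
Qed.

Definition allR : state N := [ffun _ => false].
Definition isc (s : state N) := (s == allM N) || (s == allR).

Lemma apply_const ev b : apply_event ev [ffun _ : 'I_N => b] = [ffun _ => b].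
Proof. by apply/ffunP => j; rewrite !ffunE; case: ifP => _; rewrite ?ffunE. Qed.

Lemma apply_isc ev s : isc s -> apply_event ev s = s.
Proof. by case/orP => /eqP ->; apply: apply_const. Qed.

Lemma T_isc f s : isc s -> T f s = f s.
Proof.
move=> H; rewrite /T; under eq_bigr => ev _ do rewrite apply_isc //.
by rewrite -big_distrl /= p1 mul1r.
Qed.

Lemma iter_isc k f s : isc s -> iter k T f s = f s.
Proof.
move=> H; elim: k => [|k IH] //=; by rewrite T_isc.
Qed.

End S.

Section M.
Variables (R : realType) (N : nat) (p : event N -> R).
Hypothesis p1 : \sum_(ev : event N) p ev = 1.
Variable pi : 'I_N -> R.
Hypothesis w : forall i k, pi k * e_coef p i k = pi i * e_coef p k i.

Definition Phi (s : state N) : R := \sum_(k : 'I_N) pi k * (s k)%:R.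

Lemma Phi_step ev s : Phi (apply_event ev s) - Phi s =
  \sum_(k : 'I_N | k \in ev.1) pi k * ((s (ev.2 k))%:R - (s k)%:R).
Proof.
rewrite /Phi -sumrB [RHS]big_mkcond /=; apply: eq_bigr => k _.
rewrite ffunE; case: ifP => _; first by rewrite mulrBr.
by rewrite subrr.
Qed.

Lemma T_Phi s : T p Phi s = Phi s.
Proof.
have -> : T p Phi s = Phi s * \sum_(ev : event N) p ev +
   \sum_(ev : event N) p ev * (Phi (apply_event ev s) - Phi s).
  rewrite /T big_distrr -big_split /=; apply: eq_bigr => ev _; ring.
rewrite p1 mulr1 -[RHS]addr0; congr (_ + _).
under eq_bigr => ev _ do rewrite Phi_step big_distrr big_mkcond /=.
rewrite exchange_big /=.
under eq_bigr => k _ do rewrite -big_mkcond /=.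
have Hk : forall k : 'I_N, \sum_(ev : event N | k \in ev.1)
    p ev * (pi k * ((s (ev.2 k))%:R - (s k)%:R)) =
    \sum_(i : 'I_N) e_coef p i k * (pi k * ((s i)%:R - (s k)%:R)).
  move=> k; rewrite (partition_big (fun ev : event N => ev.2 k) predT) //=.
  apply: eq_bigr => i _; rewrite /e_coef big_distrl /=.
  by apply: eq_bigr => ev /andP[_ /eqP ->].
under eq_bigr => k _ do rewrite Hk.
under eq_bigr => k _ do under eq_bigr => i _ do
  rewrite mulrCA mulrA w mulrBr.
under eq_bigr => k _ do rewrite sumrB.
rewrite sumrB exchange_big /=.
apply/eqP; rewrite subr_eq0; apply/eqP; apply: eq_bigr => i _.
apply: eq_bigr => k _; by rewrite w.
Qed.
End M.

Section D.
Variables (R : realType) (N : nat) (p : event N -> R).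
Hypothesis p0 : forall ev, 0 <= p ev.
Hypothesis p1 : \sum_(ev : event N) p ev = 1.
Variables (i0 : 'I_N) (evs : seq (event N)).
Hypothesis Hall : all (fun ev => 0 < p ev) evs.
Hypothesis Hfold : forall (s : state N) (j : 'I_N),
      foldl (fun s ev => apply_event ev s) s evs j = s i0.

Definition fnc (s : state N) : R := (~~ isc s)%:R.
Definition fc (s : state N) : R := (isc s)%:R.
Definition q := \prod_(ev <- evs) p ev.
Let L := size evs.

Lemma q_gt0 : 0 < q.
Proof.
rewrite /q; elim: evs Hall => [|ev e IH] /=; first by rewrite big_nil.
by move=> /andP[h1 h2]; rewrite big_cons mulr_gt0 // IH.
Qed.

Lemma p_le1 ev : p ev <= 1.
Proof.
rewrite -p1 (bigD1 ev) //= lerDl; by apply: sumr_ge0.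
Qed.

Lemma q_le1 : q <= 1.
Proof. by apply: prodr_ile1 => ev _; rewrite p0 p_le1. Qed.

Lemma foldl_isc s : isc (foldl (fun s ev => apply_event ev s) s evs).
Proof.
have -> : foldl (fun s ev => apply_event ev s) s evs = [ffun _ => s i0].
  by apply/ffunP => j; rewrite Hfold ffunE.
by rewrite /isc /allM /allR; case: (s i0); rewrite eqxx ?orbT.
Qed.

Lemma iterL s : iter L (T p) fnc s <= (1 - q) * fnc s.
Proof.
case H: (isc s).
  by rewrite iter_isc // /fnc H mulr0.
have Hs : iter L (T p) fnc s + iter L (T p) fc s = 1.
  rewrite -iter_add //.
  have -> : (fun x => fnc x + fc x) = (fun _ => 1).
    by apply: funext => x; rewrite /fnc /fc; case: (isc x); rewrite ?add0r ?addr0.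
  exact: iter_const.
have := path_bound p0 (f := fc) s (fun x => ler0n _ _) Hall.
rewrite /fc foldl_isc mulr1 /fnc H /= mulr1 -/L => Hq.
rewrite /fnc /fc in Hs; rewrite /q. lra.
Qed.

Lemma Tfnc_le x : T p fnc x <= fnc x.
Proof.
case H: (isc x); first by rewrite T_isc.
rewrite {2}/fnc H /= -(T_const p1 1 x); apply: T_le => // y.
by rewrite /fnc; case: (isc y).
Qed.

Lemma step s : iter L.+1 (T p) fnc s <= (1 - q) * fnc s.
Proof.
rewrite iterSr; apply: le_trans (iterL s).
apply: iter_le => //; exact: Tfnc_le.
Qed.

Lemma decay s0 k : E p s0 (k * L.+1) fnc <= (1 - q) ^+ k.
Proof.
elim: k => [|k IH].
  by rewrite mul0n E0 expr0 /fnc; case: (isc s0).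
rewrite mulSn addnC E_shift.
apply: (le_trans (y := E p s0 (k * L.+1) (fun s => (1 - q) * fnc s)));
  first (apply: E_le => // s; exact: step).
rewrite E_scale exprS; apply: ler_wpM2l => //.
have := q_le1; lra.
Qed.
End D.

Section Lim.
Local Open Scope classical_set_scope.
Lemma small (R : realType) (x e : R) : 0 <= x < 1 -> 0 < e -> exists k : nat, x ^+ k < e.
Proof.
move=> /andP[x0 x1] e0.
have Hc := @cvg_expr R x; rewrite ger0_norm // in Hc; have {}Hc := Hc x1.
have := (@cvgrPdist_lt _ R^o _ _ _ (fun n : nat => x ^+ n) 0).1 Hc e e0; case => k _ Hk.
exists k; have := Hk k (leqnn k); by rewrite sub0r normrN ger0_norm // exprn_ge0.
Qed.

Lemma limit (R : realType) (a : nat -> R) (c : R) :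
  {homo a : n m / (n <= m)%N >-> n <= m} ->
  (forall t, a t <= c) -> (forall e, 0 < e -> exists t, c - e <= a t) ->
  limn (fun t => (a t : R^o)) = c.
Proof.
move=> Ha Hc He.
have cv : cvgn (fun t => (a t : R^o)).
  apply: nondecreasing_is_cvgn => //; exists c => _ [t _ <-]; exact: Hc.
apply/eqP; rewrite eq_le; apply/andP; split.
  by apply: limr_le => //; apply: nearW => t; exact: Hc.
rewrite leNgt; apply/negP => H.
have [t Ht] := He ((c - limn (fun t => (a t : R^o))) / 2) ltac:(lra).
have := nondecreasing_cvgn_le Ha cv t. lra.
Qed.

End Lim.

Section F.
Variables (R : realType) (N : nat) (p : event N -> R).
Hypothesis p0 : forall ev, 0 <= p ev.
Hypothesis p1 : \sum_(ev : event N) p ev = 1.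
Hypothesis fa : fixation_assumption p.
Variable pi : 'I_N -> R.
Hypothesis w : forall i k, pi k * e_coef p i k = pi i * e_coef p k i.
Hypothesis pi0 : forall k, 0 <= pi k.
Hypothesis Pi0 : 0 < Phi pi (allM N).

Lemma E_add s0 t f g : E p s0 t (fun s => f s + g s) = E p s0 t f + E p s0 t g.
Proof. by rewrite /E -big_split; apply: eq_bigr => s _; rewrite mulrDr. Qed.

Lemma iter_fix k f : (forall s, T p f s = f s) -> iter k (T p) f = f.
Proof.
move=> H; elim: k => [|k IH] //=; rewrite IH; apply: funext => s; exact: H.
Qed.

Lemma Phi_ge0 s : 0 <= Phi pi s.
Proof. by apply: sumr_ge0 => k _; apply: mulr_ge0. Qed.

Lemma rho_i_eq i : rho_i p i = pi i / Phi pi (allM N).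
Proof.
case: fa => i0 [evs [Hall Hfold]].
set Pi := Phi pi (allM N).
set s0 := singleM i.
have Phis : Phi pi s0 = pi i.
  rewrite /Phi (bigD1 i) //= /s0 ffunE eqxx mulr1 big1 ?addr0 // => k /negbTE.
  by rewrite ffunE => ->; rewrite mulr0.
rewrite -Phis.
set d := fun s : state N => (s == allM N)%:R : R.
have Ea t : E p s0 t d = distr p s0 t (allM N).
  rewrite /E; under eq_bigr => s _ do rewrite mulrC; exact: sum_delta.
have mart t : E p s0 t (Phi pi) = Phi pi s0.
  by rewrite -[t]add0n E_shift E0 iter_fix // => s; exact: T_Phi.
have low t : Pi * distr p s0 t (allM N) <= Phi pi s0.
  rewrite -Ea -E_scale -(mart t); apply: E_le => // s.
  rewrite /d; case: eqP => [->|_]; first by rewrite mulr1.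
  by rewrite mulr0 Phi_ge0.
have up t : Phi pi s0 <= Pi * (distr p s0 t (allM N) + E p s0 t (@fnc R N)).
  rewrite -Ea -E_add -E_scale -(mart t); apply: E_le => // s.
  rewrite /d /fnc /isc; case: eqP => [->|_] /=; first by rewrite addr0 mulr1.
  case: eqP => [->|_] /=.
    by rewrite add0r mulr0 /Phi big1 // => k _; rewrite ffunE mulr0.
  rewrite add0r mulr1 /Pi /Phi; apply: ler_sum => k _; rewrite ffunE mulr1.
  by apply: ler_piMr => //; case: (s k); rewrite ?ler0n.
apply: limit.
- move=> n m /subnK <-; elim: (m - n)%N => [|k IH] //.
  apply: le_trans IH _; rewrite addSn -!Ea E_succ; apply: E_le => // s.
  rewrite /d; case: eqP => [->|_]; first by rewrite T_isc // /isc eqxx.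
  by apply: T_ge0 => // x; case: (_ == _).
- move=> t; rewrite ler_pdivlMr // mulrC; exact: low.
- move=> e e0.
  have q0 := q_gt0 Hall; have q1 : q p evs <= 1 := q_le1 p0 p1 evs.
  have [k Hk] := small (x := 1 - q p evs) (e := e) ltac:(apply/andP; split; lra) e0.
  exists (k * (size evs).+1)%N.
  have := @decay _ _ _ p0 p1 i0 evs Hall Hfold s0 k.
  have := up (k * (size evs).+1)%N.
  set a := distr _ _ _ _; set n := E _ _ _ _ => H1 H2.
  have : Phi pi s0 / Pi <= a + n by rewrite ler_pdivrMr // mulrC.
  lra.
Qed.
End F.

Unset Implicit Arguments.

Lemma sumif (R : realType) (N : nat) (up : {set 'I_N}) (a b : R) :
  \sum_(k : 'I_N) (if k \in up then a else b) = #|up|%:R * a + #|~: up|%:R * b.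
Proof.
rewrite (bigID (fun k => k \in up)) /=; congr (_ + _).
  rewrite (eq_bigr (fun => a)); last by move=> k ->.
  by rewrite sumr_const mulr_natl.
rewrite (eq_bigr (fun => b)); last by move=> k /negbTE ->.
rewrite sumr_const mulr_natl; congr (_ *+ _).
by apply: eq_card => k; rewrite !inE.
Qed.

Theorem mainTheorem8 (R : realType) (N : nat) (p : event N -> R)
    (up : {set 'I_N}) (eu ed er el : R) :
  is_replacement_rule p ->
  fixation_assumption p ->
  (0 < #|up|)%N -> (0 < #|~: up|)%N ->
  0 <= eu -> 0 <= ed -> 0 <= er -> 0 <= el ->
  upstream_downstream p up eu ed er el ->
  el < er ->
  forall i j : 'I_N, i \in up -> j \notin up ->
    (1 / N%:R < rho p <-> death p j < death p i) /\
    (forall u : R, 0 < u -> (u < Kclock p u <-> death p j < death p i)).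
Proof.
move=> [p0 p1] Hfa Hup Hdn heu hed her hel Hud Hlt i j Hi Hj.
set nU : R := #|up|%:R; set nD : R := #|~: up|%:R.
have nU0 : 0 < nU by rewrite ltr0n.
have nD0 : 0 < nD by rewrite ltr0n.
have HN : N%:R = nU + nD :> R.
  by rewrite /nU /nD -natrD cardsC card_ord.
set pi := fun k : 'I_N => if k \in up then er else el.
have pi0 : forall k, 0 <= pi k by move=> k; rewrite /pi; case: (k \in up).
have w : forall a b, pi b * e_coef p a b = pi a * e_coef p b a.
  move=> a b; rewrite !Hud /pi; case: (a \in up); case: (b \in up); ring.
have HPi : Phi pi (allM N) = nU * er + nD * el.
  rewrite /Phi -(@sumif R N up er el); apply: eq_bigr => k _.
  by rewrite ffunE mulr1.
have Pi0 : 0 < Phi pi (allM N).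
  rewrite HPi; apply: ltr_wpDr; [apply: mulr_ge0 => //; exact: ltW | apply: mulr_gt0 => //].
  exact: le_lt_trans Hlt.
set dU := nU * eu + nD * el; set dD := nU * er + nD * ed.
have Hd : forall k, death p k = if k \in up then dU else dD.
  move=> k; rewrite /death.
  under eq_bigr => l _ do rewrite Hud.
  case: (k \in up); exact: sumif.
have HB : Btot p = nU * dU + nD * dD.
  rewrite /Btot exchange_big /=.
  rewrite -(@sumif R N up dU dD); apply: eq_bigr => k _; by rewrite -Hd.
have Hrho : rho p = (nU * dU * er + nD * dD * el) / (nU * er + nD * el) / (nU * dU + nD * dD).
  rewrite /rho HB; congr (_ / _).
  under eq_bigr => k _ do rewrite (rho_i_eq p0 p1 Hfa w pi0 Pi0) HPi Hd.
  rewrite (eq_bigr (fun k => if k \in up then dU * er / (nU * er + nD * el)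
                         else dD * el / (nU * er + nD * el))); last first.
    by move=> k _; rewrite /pi; case: (k \in up); rewrite mulrA.
  rewrite sumif; field.
  by rewrite -HPi lt0r_neq0.
rewrite (Hd i) (Hd j) Hi (negbTE Hj).
have er0 : 0 < er by apply: le_lt_trans Hlt.
have dU0 : 0 <= dU by rewrite /dU; apply: addr_ge0; apply: mulr_ge0 => //; exact: ltW.
have dD0 : 0 < dD.
  by rewrite /dD; apply: ltr_wpDr; [apply: mulr_ge0 => //; exact: ltW | exact: mulr_gt0].
have B0 : 0 < nU * dU + nD * dD.
  by apply: ltr_wpDl; [apply: mulr_ge0 => //; exact: ltW | exact: mulr_gt0].
have P0 : 0 < nU * er + nD * el by rewrite -HPi.
have key : rho p - 1 / N%:R =
   (nU * nD * (er - el)) * (dU - dD) / ((nU + nD) * (nU * er + nD * el) * (nU * dU + nD * dD)).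
  rewrite Hrho HN; field; apply/and3P; split; apply/eqP; lra.
have den0 : 0 < (nU + nD) * (nU * er + nD * el) * (nU * dU + nD * dD).
  by rewrite !mulr_gt0 // addr_gt0.
have c0 : 0 < nU * nD * (er - el) by rewrite !mulr_gt0 // subr_gt0.
have E1 : (1 / N%:R < rho p) = (dD < dU).
  by rewrite -subr_gt0 key pmulr_lgt0 ?invr_gt0 // pmulr_rgt0 // subr_gt0.
split; first by rewrite E1.
move=> u u0; rewrite -E1.
have N0 : 0 < N%:R :> R by rewrite HN addr_gt0.
have -> : (u < Kclock p u) = (0 < N%:R * u * (rho p - 1 / N%:R)).
  rewrite -subr_gt0; congr (0 < _) || idtac.
  have -> : Kclock p u - u = N%:R * u * (rho p - 1 / N%:R).
    rewrite /Kclock; field; exact: lt0r_neq0.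
  by [].
by rewrite pmulr_rgt0 ?mulr_gt0 // subr_gt0.
Qed.
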